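(* Let $t\in[n]$, let $S\subseteq N$ be $t$-switchable, and suppose $a,b$ are connected in $S$ via a path $a_0=a,a_1,\dots,a_k=b$ in $S$. Let $L\subseteq[t]$ and $i,j\in\{0,\dots,k\}$. Then ${\rm s}(L,a_i,a_j)\in S$, and ${\rm s}(L,a_i,a_j)$ is connected to $a$ in $S$.
   Context: Fix positive integers $n, r_1,\dots,r_n$ and let $N=[r_1]\times\cdots\times[r_n]$. For $L\subseteq[n]$ and $a,b\in N$, ${\rm s}(L,a,b)\in N$ has $i$-th component $b_i$ if $i\in L$ and $a_i$ otherwise; ${\rm s}(i,a,b)={\rm s}(\{i\},a,b)$. Let $d(a,b)=\#\{j: a_j\neq b_j\}$. A subset $S\subseteq N$ is $t$-switchable if for all $a,b\in S$ with $d(a,b)=2$ and all $i\in[t]$, ${\rm s}(i,a,b)\in S$. A path in $S$ from $a$ to $b$ is a sequence $a_0=a,\dots,a_k=b$ of elements of $S$ with $a_{j-1}$ and $a_j$ differing in at most one component for all $j$; $a,b$ are connected in $S$ if such a path exists. *)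

(* Defs.v *)
From mathcomp Require Import all_boot.
Set Implicit Arguments. Unset Strict Implicit. Unset Printing Implicit Defensive.

(* Components are indexed by 'I_n (i.e. [n] shifted to {0,..,n-1});
   the i-th component ranges over 'I_(r i) (i.e. [r_i] shifted). *)
Definition pt (n : nat) (r : 'I_n -> nat) := {dffun forall i : 'I_n, 'I_(r i)}.

Definition sw n (r : 'I_n -> nat) (L : {set 'I_n}) (a b : pt r) : pt r :=
  @finfun _ (fun i => 'I_(r i)) (fun i => if i \in L then b i else a i).

Definition dist n (r : 'I_n -> nat) (a b : pt r) : nat := #|[set i | a i != b i]|.

Definition switchable n (r : 'I_n -> nat) (t : nat) (S : {set pt r}) : Prop :=
  forall a b, a \in S -> b \in S -> dist a b = 2 ->
  forall i : 'I_n, i < t -> sw [set i] a b \in S.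

Definition is_path n (r : 'I_n -> nat) (S : {set pt r}) (k : nat)
  (p : nat -> pt r) (a b : pt r) : Prop :=
  p 0 = a /\ p k = b /\ (forall j, j <= k -> p j \in S) /\
  (forall j, 0 < j <= k -> dist (p j.-1) (p j) <= 1).

Definition connected n (r : 'I_n -> nat) (S : {set pt r}) (a b : pt r) : Prop :=
  exists k p, @is_path n r S k p a b.

(* Main.v *)
Require Import Defs.
From mathcomp Require Import all_boot.

Lemma swE n (r : 'I_n -> nat) L (a b : pt r) w :
  sw L a b w = if w \in L then b w else a w.
Proof. by rewrite /sw ffunE. Qed.

Lemma sw_same n (r : 'I_n -> nat) L (a : pt r) : sw L a a = a.
Proof. by apply/ffunP => w; rewrite swE; case: ifP. Qed.

Lemma sw_comb n (r : 'I_n -> nat) L (a a' b b' : pt r) :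
  sw L (sw L a b') (sw L a' b) = sw L a b.
Proof. by apply/ffunP => w; rewrite !swE; case: (w \in L). Qed.

Lemma dist_sym n (r : 'I_n -> nat) (a b : pt r) : dist a b = dist b a.
Proof. by rewrite /dist; apply: eq_card => w; rewrite !inE eq_sym. Qed.

Lemma dist_same n (r : 'I_n -> nat) (a : pt r) : dist a a = 0.
Proof.
rewrite /dist; apply/eqP; rewrite cards_eq0; apply/eqP/setP => w.
by rewrite !inE eqxx.
Qed.

Lemma dist_sw_le n (r : 'I_n -> nat) L (a a' b b' : pt r) :
  dist (sw L a b') (sw L a' b) <= dist b' b + dist a a'.
Proof.
rewrite /dist; apply: leq_trans (leq_card_setU _ _).
apply: subset_leq_card; apply/subsetP => w; rewrite !inE !swE.
by case: (w \in L) => /= ->; rewrite ?orbT.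
Qed.

Lemma sw_in n (r : 'I_n -> nat) t (S : {set pt r}) (hS : switchable t S)
  (L : {set 'I_n}) (hL : forall l : 'I_n, l \in L -> l < t) x y :
  x \in S -> y \in S -> dist x y <= 2 -> sw L x y \in S.
Proof.
move=> xS yS dxy.
pose D := [set w | x w != y w].
have dD : dist x y = #|D| by [].
case: (boolP [exists w, (w \in D) && (w \in L)]) => [/existsP [w1 /andP [w1D w1L]] | hn1].
- case: (boolP [exists w, (w \in D) && (w \notin L)]) => [/existsP [w2 /andP [w2D w2L]] | hn2].
  + have w12 : w1 != w2 by apply: contraNneq w2L => <-.
    have eD : D = [set w1; w2].
      apply/eqP; rewrite eq_sym eqEcard; apply/andP; split.
        apply/subsetP => w; rewrite !inE.
        by case/orP => /eqP ->; [move: w1D | move: w2D]; rewrite inE.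
      by rewrite cards2 w12 -dD.
    have -> : sw L x y = sw [set w1] x y.
      apply/ffunP => w; rewrite !swE in_set1.
      case: (boolP (w \in D)) => wD.
      * move: wD; rewrite eD !inE => /orP [] /eqP ->.
          by rewrite w1L eqxx.
        by rewrite (negbTE w2L) eq_sym (negbTE w12).
      * move: wD; rewrite inE negbK => /eqP ->.
        by case: ifP; case: ifP.
    apply: hS => //; last exact: hL.
    by rewrite dD eD cards2 w12.
  + have -> : sw L x y = y => //.
    apply/ffunP => w; rewrite swE; case: ifP => // wL.
    move: hn2; rewrite negb_exists => /forallP /(_ w).
    by rewrite wL /= andbT inE negbK => /eqP.
- have -> : sw L x y = x => //.
  apply/ffunP => w; rewrite swE; case: ifP => // wL.
  move: hn1; rewrite negb_exists => /forallP /(_ w).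
  by rewrite wL /= andbT inE negbK => /eqP ->.
Qed.

Lemma conn_refl n (r : 'I_n -> nat) (S : {set pt r}) x : x \in S -> connected S x x.
Proof.
move=> xS; exists 0, (fun _ => x); split => //; split => //; split.
  by move=> j.
by move=> j /andP [] /leq_trans H /H.
Qed.

Lemma conn_prepend n (r : 'I_n -> nat) (S : {set pt r}) x y z :
  x \in S -> dist x y <= 1 -> connected S y z -> connected S x z.
Proof.
move=> xS dxy [k [p [p0 [pk [pS pd]]]]].
exists k.+1, (fun m => if m is m'.+1 then p m' else x); split => //; split => //; split.
  by case=> // j /= jk; apply: pS.
move=> [|[|j]] //= jk; first by rewrite p0.
by apply: (pd j.+1) => /=.
Qed.

Arguments swE {n r}.
Arguments sw_same {n r}.
Arguments sw_comb {n r}.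
Arguments dist_sym {n r}.
Arguments dist_same {n r}.
Arguments dist_sw_le {n r}.
Arguments sw_in {n r}.
Arguments conn_refl {n r}.
Arguments conn_prepend {n r}.

Theorem lemma3p5 (n : nat) (r : 'I_n -> nat) (hr : forall i, 0 < r i)
  (t : nat) (ht : 1 <= t <= n) (S : {set pt r}) (hS : switchable t S)
  (a b : pt r) (k : nat) (p : nat -> pt r) (hp : is_path S k p a b)
  (L : {set 'I_n}) (hL : forall l, l \in L -> l < t)
  (i j : nat) (hi : i <= k) (hj : j <= k) :
  sw L (p i) (p j) \in S /\ connected S (sw L (p i) (p j)) a.
Proof.
case: hp => [p0 [pk [pS pd]]].
have pd' : forall m, m < k -> dist (p m) (p m.+1) <= 1.
  by move=> m mk; apply: (pd m.+1) => /=.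
have cS : forall d i j, i <= k -> j <= k -> i + d = j \/ j + d = i ->
    sw L (p i) (p j) \in S.
  elim=> [|d IH] i' j' ik jk.
    by case=> <-; rewrite addn0 sw_same; apply: pS.
  case=> e.
  - subst j'; rewrite addnS in jk *.
    rewrite -(sw_comb L (p i') (p i'.+1) (p (i' + d).+1) (p (i' + d))).
    have h1 : i' + d <= k by exact: ltnW.
    have h0 : i' < k by exact: leq_ltn_trans (leq_addr _ _) jk.
    apply: (@sw_in _ _ _ _ hS L hL).
    + by apply: IH => //; left.
    + by apply: IH => //; left; rewrite addSn.
    + apply: leq_trans (dist_sw_le _ _ _ _ _) _.
      by rewrite (leq_add (pd' _ jk) (pd' _ (leq_ltn_trans (leq_addr _ _) jk))).
  - subst i'; rewrite addnS in ik *.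
    rewrite -(sw_comb L (p (j' + d).+1) (p (j' + d)) (p j') (p j'.+1)).
    have h1 : j' + d <= k by exact: ltnW.
    have h2 : j' < k by exact: leq_ltn_trans (leq_addr _ _) ik.
    apply: (@sw_in _ _ _ _ hS L hL).
    + by apply: IH => //; right; rewrite addSn.
    + by apply: IH => //; right.
    + apply: leq_trans (dist_sw_le _ _ _ _ _) _.
      by rewrite dist_sym (dist_sym (p _.+1)) (leq_add (pd' _ h2) (pd' _ ik)).
have cij : forall i j, i <= k -> j <= k -> sw L (p i) (p j) \in S.
  move=> i' j' ik jk; case: (leqP i' j') => h.
    by apply: (cS (j' - i')) => //; left; rewrite subnKC.
  by apply: (cS (i' - j')) => //; right; rewrite subnKC // ltnW.
split; first exact: cij.
have pc : forall m, m <= k -> connected S (p m) a.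
  elim=> [|m IH] mk; first by rewrite p0; apply: conn_refl; rewrite -p0; apply: pS.
  apply: conn_prepend (IH (ltnW mk)); first exact: pS.
  by rewrite dist_sym; apply: pd'.
have cc : forall d j, j <= k -> i + d = j \/ j + d = i ->
    connected S (sw L (p i) (p j)) a.
  elim=> [|d IH] j' jk.
    by case=> <-; rewrite addn0 sw_same; apply: pc.
  case=> e.
  - subst j'; rewrite addnS in jk *.
    apply: (@conn_prepend _ _ S _ (sw L (p i) (p (i + d)))).
    + exact: cij.
    + apply: leq_trans (dist_sw_le _ _ _ _ _) _.
      by rewrite dist_same addn0 dist_sym pd'.
    + by apply: IH; [exact: ltnW | left].
  - subst i; rewrite addnS in hi *.
    have h2 : j' < k by exact: leq_ltn_trans (leq_addr _ _) hi.
    apply: (@conn_prepend _ _ S _ (sw L (p (j' + d).+1) (p j'.+1))).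
    + exact: cij.
    + apply: leq_trans (dist_sw_le _ _ _ _ _) _.
      by rewrite dist_same addn0 pd'.
    + by have := IH j'.+1 h2; rewrite addnS; apply; right; rewrite addSn.
case: (leqP i j) => h.
  by apply: (cc (j - i)) => //; left; rewrite subnKC.
by apply: (cc (i - j)) => //; right; rewrite subnKC // ltnW.
Qed.
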